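(* (LipSDP-Neuron upper bound for two-layer networks.) Let $W\in\mathbb{R}^{n\times m}$, $u\in\mathbb{R}^{1\times n}$ and real numbers $a\le b$. Suppose $\zeta\ge0$ and $\lambda\in\mathbb{R}^n_+$ are such that, with $T=\mathrm{diag}(\lambda)$, $$\begin{pmatrix}-2ab\,W^TTW-\zeta I_m& (a+b)W^TT\\ (a+b)TW& -2T+u^Tu\end{pmatrix}\preceq 0 .$$ Then $$\sqrt{\zeta}\;\ge\;\max_{y\in[a,b]^n}\big\|W^T\mathrm{diag}(y)u^T\big\|_2 .$$ In particular (with $a=0$, $b=1$) the optimal value of the program $\min\{\sqrt\zeta\}$ subject to these constraints is an upper bound on the $\ell_2$-FGL $\max_{y\in\{0,1\}^n}\|W^T\mathrm{diag}(y)u^T\|_2$ of the ReLU network $x\mapsto u\,\mathrm{ReLU}(Wx)$.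
   Context: $\mathrm{diag}(v)$ is the diagonal matrix with diagonal $v$; $I_m$ is the $m\times m$ identity; $P\preceq0$ means $-P$ is positive semidefinite; $\mathbb{R}_+=[0,\infty)$. *)

(* Defs.v *)
From mathcomp Require Import all_boot all_order all_algebra.
Set Implicit Arguments. Unset Strict Implicit. Unset Printing Implicit Defensive.
Import Order.TTheory GRing.Theory Num.Theory.
Local Open Scope ring_scope.

Definition psd (R : realFieldType) (k : nat) (A : 'M[R]_k) : Prop :=
  A^T = A /\ forall x : 'cV[R]_k, 0 <= (x^T *m A *m x) 0 0.

Definition nsd (R : realFieldType) (k : nat) (P : 'M[R]_k) : Prop := psd (- P).

Definition norm2 (R : rcfType) (k : nat) (v : 'cV[R]_k) : R :=
  Num.sqrt (\sum_(i < k) v i 0 ^+ 2).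

Definition lipsdp_mx (R : rcfType) (n m : nat) (W : 'M[R]_(n, m))
  (u : 'rV[R]_n) (a b zeta : R) (lambda : 'rV[R]_n) : 'M[R]_(m + n) :=
  let T := diag_mx lambda in
  block_mx ((- (2 * a * b)) *: (W^T *m T *m W) - zeta%:M) ((a + b) *: (W^T *m T))
           ((a + b) *: (T *m W)) (- (2%:R *: T) + u^T *m u).

(* Main.v *)
Require Import Defs.
From mathcomp Require Import all_boot all_order all_algebra.
From mathcomp Require Import ring lra.
Import Order.TTheory GRing.Theory Num.Theory.
Local Open Scope ring_scope.

Lemma quad (R : comPzSemiRingType) n (p q : 'cV[R]_n) (l : 'rV[R]_n) :
  (p^T *m diag_mx l *m q) 0 0 = \sum_i p i 0 * l 0 i * q i 0.
Proof. rewrite mul_mx_diag mxE; apply: eq_bigr => i _; by rewrite !mxE. Qed.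

Theorem mainTheorem8 (R : rcfType) (n m : nat) (W : 'M[R]_(n, m))
  (u : 'rV[R]_n) (a b zeta : R) (lambda : 'rV[R]_n) :
  a <= b -> 0 <= zeta -> (forall i, 0 <= lambda 0 i) ->
  nsd (lipsdp_mx W u a b zeta lambda) ->
  forall y : 'rV[R]_n, (forall i, a <= y 0 i <= b) ->
    norm2 (W^T *m diag_mx y *m u^T) <= Num.sqrt zeta.
Proof.
move=> hab hz hl [_ H] y hy.
set g := W^T *m diag_mx y *m u^T.
set v := W *m g.
set z := diag_mx y *m v.
set T := diag_mx lambda.
have := H (col_mx g z).
rewrite /lipsdp_mx -/T opp_block_mx tr_col_mx mul_row_block mul_row_col.
rewrite ?(mulmxDl, mulmxDr, mulmxN, mulNmx, mulmxBl, mulmxBr).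
rewrite -?(scalemxAl, scalemxAr).
have e1 : g^T *m (W^T *m T *m W) *m g = v^T *m T *m v by rewrite /v [in RHS]trmx_mul !mulmxA.
have e2 : g^T *m zeta%:M *m g = zeta *: (g^T *m g) by rewrite mul_mx_scalar scalemxAl.
have e3 : z^T *m (T *m W) *m g = z^T *m T *m v by rewrite /v !mulmxA.
have e4 : g^T *m (W^T *m T) *m z = v^T *m T *m z by rewrite /v [in RHS]trmx_mul !mulmxA.
have e5 : z^T *m (u^T *m u) *m z = (u *m z)^T *m (u *m z) by rewrite [in RHS]trmx_mul !mulmxA.
have e6 : u *m z = g^T *m g.
  by rewrite /z /v /g !trmx_mul !trmxK tr_diag_mx !mulmxA.
rewrite e1 e2 e3 e4 e5 e6.
have Zd : (g^T *m g) 0 0 = \sum_i g i 0 ^+ 2.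
  by rewrite mxE; apply: eq_bigr => i _; rewrite mxE expr2.
have Qd : ((g^T *m g)^T *m (g^T *m g)) 0 0 = (g^T *m g) 0 0 ^+ 2.
  by rewrite mxE big_ord1 mxE expr2 !ord1.
have K : (2 * a * b) * (v^T *m T *m v) 0 0 - (a + b) * ((z^T *m T *m v) 0 0 + (v^T *m T *m z) 0 0)
    + 2 * (z^T *m T *m z) 0 0 = \sum_i 2 * lambda 0 i * v i 0 ^+ 2 * ((y 0 i - a) * (y 0 i - b)).
  rewrite !quad mulrDr opprD !mulr_sumr -!sumrN -!big_split /=.
  apply: eq_bigr => i _; rewrite /z mul_diag_mx !mxE; ring.
have Kle : \sum_i 2 * lambda 0 i * v i 0 ^+ 2 * ((y 0 i - a) * (y 0 i - b)) <= 0.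
  apply: sumr_le0 => i _; rewrite mulr_ge0_le0 //.
    by rewrite mulr_ge0 ?sqr_ge0 // mulr_ge0.
  by have /andP[h1 h2] := hy i; rewrite mulr_ge0_le0 // ?subr_ge0 // subr_le0.
move: K Kle Qd Zd.
move: (v^T *m T *m v) (z^T *m T *m v) (v^T *m T *m z) (z^T *m T *m z).
move: ((g^T *m g)^T *m (g^T *m g)) => Q P1 P2 P3 P4.
move: (g^T *m g) => G.
set S := \sum_i _.
move=> K Kle Qd Zd; rewrite !mxE Qd => HH.
set Z := G 0 0.
have Z0 : 0 <= Z by rewrite /Z Zd sumr_ge0 // => i _; rewrite sqr_ge0.
have ZZ1 : Z ^+ 2 <= zeta * Z + S.
  rewrite -K -subr_ge0; apply: (le_trans HH); rewrite le_eqVlt; apply/orP; left; rewrite /Z; apply/eqP; ring.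
have ZZ : Z ^+ 2 <= zeta * Z by apply: (le_trans ZZ1); rewrite gerDl.
have Zz : Z <= zeta.
  have [->|Zn] := eqVneq Z 0; first by [].
  have Zp : 0 < Z by rewrite lt_def Zn Z0.
  by rewrite expr2 ler_pM2r // in ZZ.
by rewrite /norm2 -Zd ler_sqrt.
Qed.
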